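(* Let $M\in S_d^+$, let $\mathcal T$ be an $M$-reduced mesh with associated Hopf–Lax operator $\Lambda$, and fix $T\in\mathcal T$ with non-zero vertices $v_1,\dots,v_d$. Define $\delta_+:\mathbb Z^d\to\mathbb R_+\cup\{\infty\}$ by $\delta_+(z):=\infty$ if $-z\notin\mathbb R_+T:=\{rx;\ r\ge0,\ x\in T\}$, and otherwise, writing $z+\beta_1v_1+\dots+\beta_dv_d=0$ with $\beta_i\in\mathbb Z_{\ge0}$, $$\delta_+(z):=\|z\|_M+(\sin\theta_M(T))^2\sum_{i=1}^d s(\beta_i)\|v_i\|_M,\qquad s(\beta):=\sum_{k=1}^{\beta}\frac1k.$$ Then $\delta_+$ is a discrete super-solution.
   Context: $S_d^+$ is the set of $d\times d$ symmetric positive definite matrices; $\langle u,v\rangle_M:=u^TMv$, $\|u\|_M:=\sqrt{\langle u,u\rangle_M}$. An $M$-reduced mesh is a finite conforming mesh $\mathcal T$ of simplices in $\mathbb R^d$ such that: (I) the union of its simplices is a neighborhood of the origin; (II) the vertices of each $T\in\mathcal T$ lie in $\mathbb Z^d$ and $T$ has volume $1/d!$; (III) each $T\in\mathcal T$ has the origin as a vertex, and its other vertices $v_1,\dots,v_d$ satisfy $\langle v_i,v_j\rangle_M\ge0$ for all $i,j$. (When $-z\in\mathbb R_+T$ with $z\in\mathbb Z^d$, the $v_i$ form a basis of $\mathbb Z^d$, so the nonnegative integers $\beta_i$ exist and are unique.) The angle $\theta_M(T)\in[0,\pi]$ is given by $\cos\theta_M(T):=\min_{u,v\in T\setminus\{0\}}\frac{\langle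 u,v\rangle_M}{\|u\|_M\|v\|_M}$. For $\delta:\mathbb Z^d\to\mathbb R_+\cup\{\infty\}$ and $z\in\mathbb Z^d$, $\Lambda(\delta,z):=\min\{\|\sum_{i=1}^k\alpha_iw_i\|_M+\sum_{i=1}^k\alpha_i\delta(z+w_i)\}$ over $1\le k\le d$, $\alpha_i\ge0$ with $\sum_i\alpha_i=1$, and non-zero vertices $w_1,\dots,w_k$ of a common simplex of $\mathcal T$ (convention $0\times\infty=0$). A map $\delta$ is a super-solution if $\delta(0)=0$ and $\delta(z)\ge\Lambda(\delta,z)$ for all $z\in\mathbb Z^d\setminus\{0\}$. *)

(* Defs.v *)
From HB Require Import structures.
From mathcomp Require Import all_boot all_order all_algebra.
From mathcomp Require Import all_classical all_reals all_analysis.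
Set Implicit Arguments. Unset Strict Implicit. Unset Printing Implicit Defensive.
Import Order.TTheory GRing.Theory Num.Theory.
Local Open Scope ring_scope.

(* A simplex T of an
   M-reduced mesh has the origin as a vertex (condition (III)); it is
   represented by the matrix V : 'M[int]_d whose rows are its non-zero
   vertices v_1, ..., v_d, i.e. T = conv {0, v_1, ..., v_d}. *)

Section Defs.
Variables (R : realType) (d : nat).

Definition ipM (M : 'M[R]_d) (u v : 'rV[R]_d) : R := (u *m M *m v^T) 0 0.
Definition nrmM (M : 'M[R]_d) (u : 'rV[R]_d) : R := Num.sqrt (ipM M u u).

Definition spd (M : 'M[R]_d) : Prop :=
  M^T = M /\ forall u : 'rV[R]_d, u != 0 -> 0 < ipM M u u.

Definition toR (z : 'rV[int]_d) : 'rV[R]_d := map_mx (fun x : int => x%:~R) z.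

Definition vertR (V : 'M[int]_d) (i : 'I_d) : 'rV[R]_d := toR (row i V).

Definition in_simplex (V : 'M[int]_d) (x : 'rV[R]_d) : Prop :=
  exists lam : 'I_d -> R, (forall i, 0 <= lam i) /\ \sum_i lam i <= 1 /\
    x = \sum_i lam i *: vertR V i.

Definition is_vertex (V : 'M[int]_d) (x : 'rV[R]_d) : Prop :=
  x = 0 \/ exists i, x = vertR V i.

Definition in_conv (S : 'rV[R]_d -> Prop) (x : 'rV[R]_d) : Prop :=
  exists (n : nat) (p : 'I_n -> 'rV[R]_d) (lam : 'I_n -> R),
    (forall i, S (p i)) /\ (forall i, 0 <= lam i) /\ \sum_i lam i = 1 /\
    x = \sum_i lam i *: p i.

Definition in_cone (V : 'M[int]_d) (x : 'rV[R]_d) : Prop :=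
  exists r : R, 0 <= r /\ exists2 y, in_simplex V y & x = r *: y.

Definition reduced_mesh (M : 'M[R]_d) (mesh : seq 'M[int]_d) : Prop :=
  (forall V W, V \in mesh -> W \in mesh -> forall x,
      (in_simplex V x /\ in_simplex W x) <->
      in_conv (fun y => is_vertex V y /\ is_vertex W y) x) /\
  (exists2 eps : R, 0 < eps & forall x : 'rV[R]_d,
      (forall i, `|x 0 i| < eps) -> exists2 V, V \in mesh & in_simplex V x) /\
  (* (II) integer vertices and volume 1/d!, i.e. |det (v_1,...,v_d)| = 1 *)
  (forall V, V \in mesh -> `|\det V| = 1) /\
  (forall V, V \in mesh -> forall i j, 0 <= ipM M (vertR V i) (vertR V j)).

(* cos theta_M(T) (a min, written as an inf) and theta_M(T) in [0, pi] *)
Definition cos_theta (M : 'M[R]_d) (V : 'M[int]_d) : R :=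
  inf [set c : R | exists u v : 'rV[R]_d,
         [/\ in_simplex V u, u != 0, in_simplex V v, v != 0 &
             c = ipM M u v / (nrmM M u * nrmM M v)]].
Definition theta (M : 'M[R]_d) (V : 'M[int]_d) : R := acos (cos_theta M V).

Definition harm (b : nat) : R := \sum_(1 <= k < b.+1) (k%:R)^-1.

(* Hopf-Lax operator Lambda(delta, z) (a min, written as an inf);
   the convention 0 * oo = 0 is the one of MathComp-Analysis' \bar R. *)
Definition HopfLax (M : 'M[R]_d) (mesh : seq 'M[int]_d)
  (delta : 'rV[int]_d -> \bar R) (z : 'rV[int]_d) : \bar R :=
  ereal_inf [set e : \bar R | exists2 V, V \in mesh &
    exists k : nat, (1 <= k <= d)%N /\
    exists f : 'I_k -> 'I_d, injective f /\
    exists alpha : 'I_k -> R, (forall i, 0 <= alpha i) /\ \sum_i alpha i = 1 /\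
      e = ((nrmM M (\sum_i alpha i *: vertR V (f i)))%:E +
           \sum_i (alpha i)%:E * delta (z + row (f i) V)%R)%E].

Definition supersolution (M : 'M[R]_d) (mesh : seq 'M[int]_d)
  (delta : 'rV[int]_d -> \bar R) : Prop :=
  (forall z, (0 <= delta z)%E) /\ delta 0 = 0%E /\
  (forall z, z != 0 -> (HopfLax M mesh delta z <= delta z)%E).

Definition cone_coeffs (V : 'M[int]_d) (z : 'rV[int]_d) (b : 'I_d -> nat) : Prop :=
  toR z + \sum_i (b i)%:R *: vertR V i = 0.

Definition deltap_val (M : 'M[R]_d) (V : 'M[int]_d) (z : 'rV[int]_d)
  (b : 'I_d -> nat) : R :=
  nrmM M (toR z) + sin (theta M V) ^+ 2 * \sum_i harm (b i) * nrmM M (vertR V i).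

(* delta_+ ; when -z in R_+ T the (unique) beta is picked by choice *)
Definition deltap (M : 'M[R]_d) (V : 'M[int]_d) (z : 'rV[int]_d) : \bar R :=
  match pselect (in_cone V (- toR z)) with
  | left _ =>
      match pselect (exists b, cone_coeffs V z b) with
      | left H => (deltap_val M V z (proj1_sig (cid H)))%:E
      | right _ => +oo%E
      end
  | right _ => +oo%E
  end.

End Defs.

(* Main.v *)
Require Import Defs.
From HB Require Import structures.
From mathcomp Require Import all_boot all_order all_algebra.
From mathcomp Require Import all_classical all_reals all_analysis.
From mathcomp Require Import ring lra.
Import Order.TTheory GRing.Theory Num.Theory.
Local Open Scope ring_scope.
Section S.
Variables (R : realType) (d : nat).
Implicit Types (M : 'M[R]_d) (u v w : 'rV[R]_d) (V : 'M[int]_d).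

Lemma ipMDl M u v w : ipM M (u + v) w = ipM M u w + ipM M v w.
Proof. by rewrite /ipM !mulmxDl mxE. Qed.
Lemma ipMZl M a u w : ipM M (a *: u) w = a * ipM M u w.
Proof. by rewrite /ipM -!scalemxAl mxE. Qed.
Lemma ipMDr M u v w : ipM M w (u + v) = ipM M w u + ipM M w v.
Proof. by rewrite /ipM linearD /= mulmxDr mxE. Qed.
Lemma ipMZr M a u w : ipM M w (a *: u) = a * ipM M w u.
Proof. by rewrite /ipM linearZ /= -scalemxAr mxE. Qed.
Lemma ipM0l M w : ipM M 0 w = 0.
Proof. by rewrite /ipM !mul0mx mxE. Qed.
Lemma ipMC M u v : M^T = M -> ipM M u v = ipM M v u.
Proof.
move=> hM; rewrite /ipM.
have -> : v *m M *m u^T = (u *m M *m v^T)^T by rewrite !trmx_mul trmxK hM mulmxA.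
by rewrite [RHS]mxE.
Qed.
Lemma ipMNl M u w : ipM M (- u) w = - ipM M u w.
Proof. by rewrite -scaleN1r ipMZl mulN1r. Qed.
Lemma ipM_suml M (I : finType) (a : I -> R) (x : I -> 'rV[R]_d) w :
  ipM M (\sum_i a i *: x i) w = \sum_i a i * ipM M (x i) w.
Proof.
elim/big_rec2: _ => [|i y1 y2 _ <-]; first by rewrite ipM0l.
by rewrite ipMDl ipMZl.
Qed.

Lemma toR_map (z : 'rV[int]_d) : toR R z = map_mx intr z.
Proof. by []. Qed.

Lemma det_toR (V : 'M[int]_d) : \det (map_mx (fun x : int => x%:~R : R) V) = (\det V)%:~R.
Proof. by rewrite (det_map_mx (intr : {rmorphism int -> R})). Qed.

Definition comb (V : 'M[int]_d) (p : 'I_d -> R) := \sum_i p i *: vertR R V i.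

Lemma comb_mx V p : comb V p = (\row_i p i) *m map_mx (fun x : int => x%:~R : R) V.
Proof.
rewrite mulmx_sum_row /comb; apply: eq_bigr => i _.
by rewrite mxE /vertR /toR map_row.
Qed.

Lemma comb_inj V p q : \det V != 0 -> comb V p = comb V q -> p =1 q.
Proof.
move=> hV e.
have hu : map_mx (fun x : int => x%:~R : R) V \in unitmx.
  by rewrite unitmxE unitfE det_toR intr_eq0.
have : (\row_i p i) = (\row_i q i).
  by rewrite -(mulmxK hu (\row_i p i)) -(mulmxK hu (\row_i q i)) -!comb_mx e.
by move/rowP => h i; have := h i; rewrite !mxE.
Qed.

Lemma ipM0r M w : ipM M w 0 = 0.
Proof. by rewrite /ipM linear0 mulmx0 mxE. Qed.
Lemma ipMNr M u w : ipM M w (- u) = - ipM M w u.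
Proof. by rewrite -scaleN1r ipMZr mulN1r. Qed.
Lemma ipM_sumr M (I : finType) (a : I -> R) (x : I -> 'rV[R]_d) w :
  ipM M w (\sum_i a i *: x i) = \sum_i a i * ipM M w (x i).
Proof.
elim/big_rec2: _ => [|i y1 y2 _ <-]; first by rewrite ipM0r.
by rewrite ipMDr ipMZr.
Qed.

Lemma nrmN M u : nrmM M (- u) = nrmM M u.
Proof. by rewrite /nrmM ipMNl ipMNr opprK. Qed.
Lemma nrmZ M k u : 0 <= k -> nrmM M (k *: u) = k * nrmM M u.
Proof.
move=> hk; rewrite /nrmM ipMZl ipMZr mulrA sqrtrM ?mulr_ge0 //.
by rewrite -expr2 sqrtr_sqr ger0_norm.
Qed.
Lemma nrm0 M : nrmM M 0 = 0.
Proof. by rewrite /nrmM ipM0l sqrtr0. Qed.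
Lemma nrm_ge0 M u : 0 <= nrmM M u.
Proof. exact: sqrtr_ge0. Qed.

Lemma ip_comb M V p q : ipM M (comb V p) (comb V q) =
  \sum_i \sum_j p i * q j * ipM M (vertR R V i) (vertR R V j).
Proof.
rewrite /comb ipM_suml; apply: eq_bigr => i _.
rewrite ipM_sumr big_distrr; apply: eq_bigr => j _ /=; ring.
Qed.

Lemma ip_comb_ge0 M V p q :
  (forall i j, 0 <= ipM M (vertR R V i) (vertR R V j)) ->
  (forall i, 0 <= p i) -> (forall i, 0 <= q i) -> 0 <= ipM M (comb V p) (comb V q).
Proof.
move=> hG hp hq; rewrite ip_comb; apply: sumr_ge0 => i _; apply: sumr_ge0 => j _.
by rewrite !mulr_ge0.
Qed.

Lemma ip_comb_single M V p q i j :
  (forall i j, 0 <= ipM M (vertR R V i) (vertR R V j)) ->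
  (forall i, 0 <= p i) -> (forall i, 0 <= q i) ->
  p i * q j * ipM M (vertR R V i) (vertR R V j) <= ipM M (comb V p) (comb V q).
Proof.
move=> hG hp hq; rewrite ip_comb (bigD1 i) //= (bigD1 j) //= -addrA lerDl.
by apply: addr_ge0; apply: sumr_ge0 => k _; rewrite ?mulr_ge0 //;
  apply: sumr_ge0 => l _; rewrite !mulr_ge0.
Qed.

Lemma comb_e V i : comb V (fun j => (j == i)%:R) = vertR R V i.
Proof.
rewrite /comb (bigD1 i) //= big1 => [|j /negbTE ->]; last by rewrite scale0r.
by rewrite eqxx scale1r addr0.
Qed.

Lemma comb0 V : comb V (fun _ => 0) = 0.
Proof. by rewrite /comb big1 // => i _; rewrite scale0r. Qed.

Lemma combZ V k p : comb V (fun i => k * p i) = k *: comb V p.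
Proof. by rewrite /comb scaler_sumr; apply: eq_bigr => i _; rewrite scalerA. Qed.

Lemma comb_cone V p : (forall i, 0 <= p i) -> in_cone V (comb V p).
Proof.
move=> hp; set P := \sum_i p i.
have hP : 0 <= P by apply: sumr_ge0.
have [P0|P0] := eqVneq P 0.
  have h0 := psumr_eq0P (fun i _ => hp i) P0.
  exists 0; split => //; exists 0.
    exists (fun _ => 0); split => //; split; first by rewrite big1.
    by rewrite /= big1 // => i _; rewrite scale0r.
  by rewrite scale0r /comb big1 // => i _; rewrite h0 // scale0r.
exists P; split => //; exists (comb V (fun i => P^-1 * p i)).
  exists (fun i => P^-1 * p i); split; first by move=> i; rewrite mulr_ge0 ?invr_ge0.
  by split => //; rewrite -mulr_sumr mulVf.
by rewrite combZ scalerA mulfV // scale1r.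
Qed.

Lemma simplex_e V i : in_simplex V (vertR R V i).
Proof.
exists (fun j => (j == i)%:R); split; first by move=> j; rewrite ler0n.
split; last by rewrite -[LHS](comb_e V i).
by rewrite (bigD1 i) //= big1 ?eqxx ?addr0 // => j /negbTE ->.
Qed.

Lemma nrm_gt0 M u : (forall u, u != 0 -> 0 < ipM M u u) -> u != 0 -> 0 < nrmM M u.
Proof. by move=> hpd hu; rewrite sqrtr_gt0 hpd. Qed.

Lemma cos_lb M V : M^T = M ->
  (forall i j, 0 <= ipM M (vertR R V i) (vertR R V j)) ->
  lbound [set c : R | exists u v : 'rV[R]_d,
         [/\ in_simplex V u, u != 0, in_simplex V v, v != 0 &
             c = ipM M u v / (nrmM M u * nrmM M v)]] 0.
Proof.
move=> hM hG c [u [v [[lu [hlu [_ ->]]] _ [lv [hlv [_ ->]]] _ ->]]].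
apply: divr_ge0; last by apply: mulr_ge0; apply: nrm_ge0.
exact: (@ip_comb_ge0 M V lu lv hG hlu hlv).
Qed.

Lemma cos_le M V p i : M^T = M -> (forall u, u != 0 -> 0 < ipM M u u) ->
  (forall i j, 0 <= ipM M (vertR R V i) (vertR R V j)) ->
  vertR R V i != 0 ->
  (forall i, 0 <= p i) -> comb V p != 0 ->
  cos_theta M V * (nrmM M (comb V p) * nrmM M (vertR R V i)) <= ipM M (comb V p) (vertR R V i).
Proof.
move=> hM hpd hG hv hp ha.
set P := \sum_i p i.
have hP : 0 <= P by apply: sumr_ge0.
have P0 : P != 0.
  apply/eqP => P0; move: ha; rewrite /comb big1 ?eqxx // => j _.
  by rewrite (psumr_eq0P (fun i _ => hp i) P0) // scale0r.
have Pp : 0 < P by rewrite lt_def P0.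
have na := @nrm_gt0 M _ hpd ha; have nv := @nrm_gt0 M _ hpd hv.
rewrite -ler_pdivlMr ?mulr_gt0 //.
apply: (ge_inf _ ); first by exists 0; exact: cos_lb.
exists (P^-1 *: comb V p), (vertR R V i); split.
- exists (fun i => P^-1 * p i); split; first by move=> j; rewrite mulr_ge0 ?invr_ge0.
  by split; [rewrite -mulr_sumr mulVf | rewrite -combZ].
- by rewrite scaler_eq0 negb_or invr_eq0 P0.
- exact: simplex_e.
- exact: hv.
rewrite ipMZl nrmZ ?invr_ge0 //; field.
by rewrite !gt_eqF.
Qed.

Lemma cos_bounds M V i0 : M^T = M -> (forall u, u != 0 -> 0 < ipM M u u) ->
  (forall i j, 0 <= ipM M (vertR R V i) (vertR R V j)) ->
  vertR R V i0 != 0 -> 0 <= cos_theta M V <= 1.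
Proof.
move=> hM hpd hG hv.
have el : ([set c : R | exists u v : 'rV[R]_d,
         [/\ in_simplex V u, u != 0, in_simplex V v, v != 0 &
             c = ipM M u v / (nrmM M u * nrmM M v)]])%classic 1.
  exists (vertR R V i0), (vertR R V i0); split => //; try exact: simplex_e.
  have := @nrm_gt0 M _ hpd hv; rewrite /nrmM => h.
  have h' : 0 < ipM M (vertR R V i0) (vertR R V i0) by rewrite -sqrtr_gt0.
  by rewrite -expr2 sqr_sqrtr ?divff ?gt_eqF // ltW.
apply/andP; split.
  by apply: lb_le_inf; [exists 1 | exact: cos_lb].
by apply: (ge_inf _ el); exists 0; exact: cos_lb.
Qed.

Lemma sin_theta2 M V : 0 <= cos_theta M V <= 1 ->
  sin (theta M V) ^+ 2 = 1 - cos_theta M V ^+ 2.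
Proof.
move=> /andP[h0 h1]; rewrite /theta sin2cos2 acosK // in_itv /= h1 andbT.
by apply: le_trans h0; rewrite lerN10.
Qed.

Lemma ipM_ge0 M u : (forall u, u != 0 -> 0 < ipM M u u) -> 0 <= ipM M u u.
Proof.
move=> hpd; have [->|h] := eqVneq u 0; first by rewrite ipM0l.
exact: ltW (hpd _ h).
Qed.

Lemma comb_ext V p q : p =1 q -> comb V p = comb V q.
Proof. by move=> e; apply: eq_bigr => i _; rewrite e. Qed.

Lemma combB V p q : comb V (fun i => p i - q i) = comb V p - comb V q.
Proof.
rewrite /comb -sumrB; apply: eq_bigr => i _; by rewrite scalerBl.
Qed.

Lemma toRD (z z' : 'rV[int]_d) : toR R (z + z') = toR R z + toR R z'.
Proof. by apply/rowP => j; rewrite !mxE intrD. Qed.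

Lemma toR0 : toR R (0 : 'rV[int]_d) = 0.
Proof. by apply/rowP => j; rewrite !mxE. Qed.

Lemma toR_eq0 (z : 'rV[int]_d) : toR R z = 0 -> z = 0.
Proof.
move/rowP => h; apply/rowP => j; have := h j; rewrite !mxE => /eqP.
by rewrite intr_eq0 => /eqP.
Qed.

Lemma harm_ge0 n : 0 <= harm R n.
Proof. by apply: sumr_ge0 => k _; rewrite invr_ge0 ler0n. Qed.

Lemma harmS n : harm R n.+1 = harm R n + (n.+1)%:R^-1.
Proof. by rewrite /harm big_nat_recr. Qed.

Lemma harm0 : harm R 0 = 0.
Proof. by rewrite /harm big_geq. Qed.

Lemma deltap_val_ge0 M V z b : 0 <= deltap_val M V z b.
Proof.
apply: addr_ge0; first exact: nrm_ge0.
apply: mulr_ge0; first exact: sqr_ge0.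
by apply: sumr_ge0 => i _; apply: mulr_ge0; [exact: harm_ge0 | exact: nrm_ge0].
Qed.

Lemma deltap_cases M V z : deltap M V z = +oo%E \/
  exists b, cone_coeffs R V z b /\ deltap M V z = (deltap_val M V z b)%:E.
Proof.
rewrite /deltap; case: pselect => H1; last by left.
case: pselect => H2; last by left.
right; case: (cid H2) => b hb /=; by exists b.
Qed.

Lemma deltap_eq M V z b : \det V != 0 -> cone_coeffs R V z b ->
  deltap M V z = (deltap_val M V z b)%:E.
Proof.
move=> hV hb.
have hc : comb V (fun i => (b i)%:R) = - toR R z.
  by apply/eqP; rewrite -addr_eq0 addrC; apply/eqP; exact: hb.
rewrite /deltap; case: pselect => H1; last first.
  by exfalso; apply: H1; rewrite -hc; apply: comb_cone => i; rewrite ler0n.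
case: pselect => H2; last by exfalso; apply: H2; exists b.
case: (cid H2) => b' hb' /=.
have hc' : comb V (fun i => (b' i)%:R) = - toR R z.
  by apply/eqP; rewrite -addr_eq0 addrC; apply/eqP; exact: hb'.
have e := @comb_inj V _ _ hV (etrans hc' (esym hc)).
rewrite /deltap_val; congr (_ + _ * _)%:E; apply: eq_bigr => i _.
by have := e i => /eqP; rewrite eqr_nat => /eqP ->.
Qed.
End S.
Arguments ipMDl {R d}.
Arguments ipMZl {R d}.
Arguments ipMDr {R d}.
Arguments ipMZr {R d}.
Arguments ipM0l {R d}.
Arguments ipMC {R d}.
Arguments ipMNl {R d}.
Arguments ipM_suml {R d}.
Arguments toR_map {R d}.
Arguments det_toR {R d}.
Arguments comb {R d}.
Arguments comb_mx {R d}.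
Arguments comb_inj {R d}.
Arguments ipM0r {R d}.
Arguments ipMNr {R d}.
Arguments ipM_sumr {R d}.
Arguments nrmN {R d}.
Arguments nrmZ {R d}.
Arguments nrm0 {R d}.
Arguments nrm_ge0 {R d}.
Arguments ip_comb {R d}.
Arguments ip_comb_ge0 {R d M V p q}.
Arguments ip_comb_single {R d}.
Arguments comb_e {R d}.
Arguments comb0 {R d}.
Arguments combZ {R d}.
Arguments comb_cone {R d}.
Arguments simplex_e {R d}.
Arguments nrm_gt0 {R d M u}.
Arguments cos_lb {R d}.
Arguments cos_le {R d M V p i}.
Arguments cos_bounds {R d M V i0}.
Arguments sin_theta2 {R d M V}.
Arguments combB {R d}.
Arguments ipM_ge0 {R d M u}.
Arguments comb_ext {R d}.
Arguments toRD {R d}.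
Arguments toR0 {R d}.
Arguments toR_eq0 {R d}.
Arguments harm_ge0 {R}.
Arguments harmS {R}.
Arguments harm0 {R}.
Arguments deltap_val_ge0 {R d}.
Arguments deltap_cases {R d}.
Arguments deltap_eq {R d}.


Lemma key (R : realType) (x y w r c bb : R) : 0 <= x -> 0 <= y -> 0 <= w -> 0 <= c -> c <= 1 ->
  c * (x * y) <= w -> 0 <= r -> r ^+ 2 = x ^+ 2 + 2 * w + y ^+ 2 -> 1 <= bb ->
  (bb - 1) ^+ 2 * y ^+ 2 <= x ^+ 2 ->
  bb * (x * r - (x ^+ 2 + w)) <= (1 - c ^+ 2) * y * r.
Proof.
move=> x0 y0 w0 c0 c1 hw r0 hr b1 hb.
set P := x * r - (x ^+ 2 + w).
have e0 : 0 <= 1 - c ^+ 2 by nra.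
have [Pn|Pp] := lerP P 0.
  apply: le_trans (_ : 0 <= _); first by nra.
  by rewrite !mulr_ge0.
set D := x * r + x ^+ 2 + w.
have Dp : 0 < D.
  have -> : D = P + 2 * (x ^+ 2 + w) by rewrite /D /P; ring.
  have : 0 <= x ^+ 2 by rewrite sqr_ge0.
  lra.
have PD : P * D = x ^+ 2 * y ^+ 2 - w ^+ 2.
  by rewrite /P /D; transitivity (x ^+ 2 * r ^+ 2 - (x ^+ 2 + w) ^+ 2); [ring | rewrite hr; ring].
have cxy : c ^+ 2 * (x ^+ 2 * y ^+ 2) <= w ^+ 2.
  have : 0 <= c * (x * y) by rewrite !mulr_ge0.
  move=> h; nra.
have PD2 : P * D <= (1 - c ^+ 2) * (x ^+ 2 * y ^+ 2) by rewrite PD; nra.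
have rx : x <= r by nra.
have bxy : bb * x * y <= 2 * x ^+ 2 + y ^+ 2.
  have [b2|b2] := lerP bb 2; first by nra.
  have : (bb - 1) * y <= x.
    have [//|h] := lerP ((bb - 1) * y) x.
    have h1 : 0 <= (bb - 1) * y by rewrite mulr_ge0 // subr_ge0.
    have hh : x * x < ((bb - 1) * y) * ((bb - 1) * y).
      apply: le_lt_trans (_ : x * ((bb - 1) * y) < _); first by rewrite ler_wpM2l // ltW.
      rewrite ltr_pM2r //; first lra.
    exfalso; move: hh; rewrite -!expr2 exprMn; lra.
  move=> h.
  have h1 : 0 <= x * (x - (bb - 1) * y) by rewrite mulr_ge0 // subr_ge0.
  have h2 : 0 <= (bb - 2) * (x * y) by rewrite mulr_ge0 ?mulr_ge0 // subr_ge0 ltW.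
  have : 0 <= y ^+ 2 by rewrite sqr_ge0.
  move: h1 h2; rewrite !expr2; nra.
have rD : bb * x ^+ 2 * y <= r * D by rewrite /D; nra.
have : bb * P * D <= (1 - c ^+ 2) * y * r * D.
  apply: le_trans (_ : bb * ((1 - c ^+ 2) * (x ^+ 2 * y ^+ 2)) <= _).
    by rewrite -mulrA ler_wpM2l //; lra.
  have : (1 - c ^+ 2) * y * (bb * x ^+ 2 * y) <= (1 - c ^+ 2) * y * (r * D).
    by rewrite ler_wpM2l // mulr_ge0.
  by nra.
rewrite ler_pM2r //.
Qed.

Arguments key {R x y w r c bb}.
Theorem proposition1p8 (R : realType) (d : nat) (M : 'M[R]_d)
  (mesh : seq 'M[int]_d) (V : 'M[int]_d) :
  spd M -> reduced_mesh M mesh -> V \in mesh ->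
  supersolution M mesh (deltap M V).
Proof.
move=> [hM hpd] [_ [_ [hdet hG']]] hV.
have hG := hG' V hV.
have hV0 : \det V != 0.
  apply/eqP => h; have := hdet V hV; rewrite h normr0 => /eqP; by rewrite eq_sym oner_eq0.
have hvne : forall i, vertR R V i != 0.
  move=> i; apply/eqP => h.
  have := @comb_inj R _ V (fun j => (j == i)%:R) (fun _ => 0) hV0
    (etrans (comb_e V i) (etrans h (esym (comb0 V)))) i.
  by rewrite eqxx => /eqP; rewrite oner_eq0.
split.
  move=> z; case: (deltap_cases M V z) => [->|[b [_ ->]]]; first exact: le0y.
  by rewrite lee_fin; exact: deltap_val_ge0.
split.
  rewrite (@deltap_eq _ _ M V 0 (fun _ => 0%N) hV0).
    by rewrite /deltap_val toR0 nrm0 big1 ?mulr0 ?addr0 // => i _; rewrite harm0 mul0r.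
  by rewrite /cone_coeffs toR0 add0r big1 // => i _; rewrite scale0r.
move=> z hz.
case: (deltap_cases M V z) => [->|[b [hb ->]]]; first exact: leey.
have [i0 _] : exists i : 'I_d, True.
  case: (pselect (exists i : 'I_d, True)) => // nod.
  by case/negP: hz; apply/eqP/rowP => i; exfalso; apply: nod; exists i.
have hd : (0 < d)%N by apply: leq_ltn_trans (leq0n i0) (ltn_ord i0).
set bR := fun i => (b i)%:R : R.
have hu : comb V bR = - toR R z.
  by apply/eqP; rewrite -addr_eq0 addrC; apply/eqP; exact: hb.
set u := comb V bR in hu.
have hbR : forall i, 0 <= bR i by move=> i; rewrite ler0n.
have u0 : u != 0.
  rewrite hu oppr_eq0; apply/negP => /eqP /toR_eq0 h; by rewrite h eqxx in hz.
set B := \sum_i bR i.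
have B0 : 0 < B.
  rewrite lt_def sumr_ge0 // andbT; apply/eqP => B0; move: u0.
  rewrite /u /comb big1 ?eqxx // => i _.
  by rewrite (psumr_eq0P (fun i _ => hbR i) B0) // scale0r.
set c := cos_theta M V.
have hc : 0 <= c <= 1 := cos_bounds hM hpd hG (hvne i0).
have s2 : sin (theta M V) ^+ 2 = 1 - c ^+ 2 := sin_theta2 hc.
set e := 1 - c ^+ 2 in s2.
set r := nrmM M u.
have r0 : 0 < r := nrm_gt0 hpd u0.
have rz : nrmM M (toR R z) = r by rewrite /r hu nrmN.
have r2 : r ^+ 2 = ipM M u u by rewrite sqr_sqrtr // ip_comb_ge0.
set H := \sum_i harm R (b i) * nrmM M (vertR R V i).
set t := fun i => bR i * nrmM M (u - vertR R V i) - e * nrmM M (vertR R V i) * ((0 < b i)%N)%:R.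
set bm := fun i j => (b j - (j == i))%N.
have hbm : forall i n, b i = n.+1 -> forall j, (bm i j)%:R = bR j - (j == i)%:R :> R.
  move=> i n hbi j; rewrite /bm natrB //.
  by case: eqP => [->|_]; rewrite ?hbi.
have ha : forall i n, b i = n.+1 -> comb V (fun j => (bm i j)%:R) = u - vertR R V i.
  move=> i n hbi; rewrite (comb_ext V _ (fun j => bR j - (j == i)%:R)); last exact: hbm hbi.
  by rewrite combB comb_e.
have ht : forall i, t i <= bR i * (r ^+ 2 - ipM M (vertR R V i) u) / r.
  move=> i; case hbi: (b i) => [|n].
    by rewrite /t /bR hbi !mul0r mulr0 subrr.
  have hai := ha i n hbi.
  set a := u - vertR R V i in hai *.
  set v := vertR R V i.
  have hp : forall j, 0 <= (bm i j)%:R :> R by move=> j; rewrite ler0n.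
  have w0 : 0 <= ipM M a v.
    rewrite -hai /v -(comb_e V i); apply: ip_comb_ge0 => // j; exact: ler0n.
  have cxy : c * (nrmM M a * nrmM M v) <= ipM M a v.
    have [a0|an0] := eqVneq a 0; first by rewrite a0 nrm0 !mul0r mulr0 ipM0l.
    have := cos_le hM hpd hG (hvne i) hp; rewrite hai => /(_ an0); exact.
  have uav : u = a + v by rewrite /a subrK.
  have hx2 : nrmM M a ^+ 2 = ipM M a a by rewrite sqr_sqrtr // ipM_ge0.
  have hy2 : nrmM M v ^+ 2 = ipM M v v by rewrite sqr_sqrtr // ipM_ge0.
  have hr2 : r ^+ 2 = nrmM M a ^+ 2 + 2 * ipM M a v + nrmM M v ^+ 2.
    rewrite r2 hx2 hy2 uav (ipMDl M a v) (ipMDr M a v a) (ipMDr M a v v) (ipMC M v a hM); ring.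
  have hvu : ipM M v u = ipM M a v + nrmM M v ^+ 2.
    by rewrite uav (ipMDr M a v v) hy2 (ipMC M v a hM).
  have hb1 : 1 <= bR i by rewrite /bR hbi ler1n.
  have hbb : (bR i - 1) ^+ 2 * nrmM M v ^+ 2 <= nrmM M a ^+ 2.
    have := @ip_comb_single _ _ M V _ _ i i hG hp hp; rewrite hai -hx2 -hy2.
    by rewrite /bm hbi eqxx subn1 /= /bR hbi -natr1 addrK expr2.
  have K := key (nrm_ge0 M a) (nrm_ge0 M v) w0 (proj1 (andP hc)) (proj2 (andP hc))
    cxy (ltW r0) hr2 hb1 hbb.
  rewrite ler_pdivlMr // /t hbi /= mulr1 hvu.
  move: K; rewrite -/e; nra.
have hsum : \sum_i t i <= (B - 1) * r.
  apply: le_trans (_ : \sum_i bR i * (r ^+ 2 - ipM M (vertR R V i) u) / r <= _).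
    by apply: ler_sum => i _; exact: ht.
  rewrite -mulr_suml.
  have -> : \sum_i bR i * (r ^+ 2 - ipM M (vertR R V i) u) = (B - 1) * r ^+ 2.
    rewrite (eq_bigr (fun i => bR i * r ^+ 2 - bR i * ipM M (vertR R V i) u)); last first.
      by move=> i _; rewrite mulrBr.
    by rewrite sumrB -mulr_suml -ipM_suml -r2 mulrBl mul1r.
  by rewrite expr2 mulrA mulfK ?gt_eqF.
have hterm : forall i, ((bR i / B)%:E * deltap M V (z + row i V) = ((t i + bR i * e * H) / B)%:E)%E.
  move=> i; case hbi: (b i) => [|n].
    rewrite /t /bR hbi !mul0r mul0e mulr0 subrr add0r mul0r //.
  have hcc : cone_coeffs R V (z + row i V) (bm i).
    change (toR R (z + row i V) + comb V (fun j => (bm i j)%:R) = 0).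
    rewrite toRD (ha i n hbi) hu.
    change (toR R z + vertR R V i + (- toR R z - vertR R V i) = 0).
    by rewrite addrACA !subrr addr0.
  rewrite (deltap_eq M V _ _ hV0 hcc) /deltap_val -EFinM; congr (_%:E).
  have hx : nrmM M (toR R (z + row i V)) = nrmM M (u - vertR R V i).
    rewrite toRD -nrmN hu opprD //.
  have hH : \sum_j harm R (bm i j) * nrmM M (vertR R V j) = H - nrmM M (vertR R V i) / bR i.
    rewrite /H (bigD1 i) //= [in RHS](bigD1 i) //=.
    rewrite /bm hbi eqxx subn1 /= harmS.
    rewrite (eq_bigr (fun j => harm R (b j) * nrmM M (vertR R V j))); last first.
      by move=> j /negbTE ->; rewrite subn0.
    rewrite /bR hbi; field; by rewrite addrC natr1 pnatr_eq0.
  rewrite hx hH s2 /t /bR hbi /=.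
  by field; rewrite gt_eqF // addrC natr1 pnatr_eq0.
apply: ge_ereal_inf.
exists ((nrmM M (\sum_(i < d) (bR i / B) *: vertR R V i))%:E +
   \sum_(i < d) ((bR i / B)%:E * deltap M V (z + row i V)))%E.
  exists V => //; exists d; split; first by rewrite hd leqnn.
  exists (fun i => i); split => //; exists (fun i => bR i / B); split.
    by move=> i; rewrite divr_ge0 // ltW.
  by split => //; rewrite -mulr_suml divff // gt_eqF.
rewrite (eq_bigr _ (fun i _ => hterm i)) sumEFin -EFinD lee_fin.
have -> : \sum_i (bR i / B) *: vertR R V i = B^-1 *: u.
  by rewrite /u -combZ; apply: comb_ext => i; rewrite mulrC.
rewrite /deltap_val -/H nrmZ -/r; last by rewrite invr_ge0 ltW.
rewrite rz s2 -mulr_suml big_split /=.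
have -> : \sum_i bR i * e * H = B * e * H by rewrite -!mulr_suml.
set T := \sum_i t i in hsum *.
have h1 : T / B <= (B - 1) * r / B by rewrite ler_pM2r ?invr_gt0.
have h2 : (B - 1) * r / B = r - B^-1 * r by field; rewrite gt_eqF.
have h3 : (T + B * e * H) / B = T / B + e * H by field; rewrite gt_eqF.
rewrite h3; rewrite h2 in h1; lra.
Qed.
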